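(* If $\Sigma$ is a finite ''CM$_{\mathbf Z}$'' simplicial homology$_{\mathbf Z}$ $n$-manifold, then $\Sigma$ is orientable$_{\mathbf Z}$.
   Context: Simplicial complexes contain the empty simplex $\emptyset$ (dim $-1$) when nonempty. $\mathrm{cost}_\Sigma\sigma=\{\tau\in\Sigma:\sigma\not\subset\tau\}$. Augmental homology: reduced simplicial homology with $\emptyset$ in degree $-1$; relative homology ordinary for a nonempty subcomplex and reduced for the subcomplex $\emptyset$. Simplicial homology$_{\mathbf Z}$ $n$-manifold ($n=\dim\Sigma$): $\bullet\bullet$ (two vertices, no edge), $\{\emptyset\}$, or $|\Sigma|$ connected, locally compact, with $H_i(|\Sigma|,|\Sigma|\setminus\{x\};\mathbf Z)=0$ for $i\ne n$, $\cong0$ or $\mathbf Z$ for $i=n$, for all $x$, and $\cong\mathbf Z$ for some $x$. $\mathrm{Bd}_{\mathbf Z}\Sigma=\{\sigma:\mathbf H_n(\Sigma,\mathrm{cost}_\Sigma\sigma;\mathbf Z)=0\}$; finite $\Sigma$ is orientable$_{\mathbf Z}$ if $\mathbf H_n(\Sigma,\mathrm{Bd}_{\mathbf Z}\Sigma;\mathbf Z)\cong\mathbf Z$. ''CM$_{\mathbf Z}$'' for a complex of dimension $m$: $H_i(|\Sigma|,|\Sigma|\setminus\{x\};\mathbf Z)=0$ for all $i\ne m$ and all $x\in|\Sigma|$, reduced $\mathbf H_i(\Sigma;\mathbf Z)=0$ for $i\ne m$, and some local group in degree $m$ has $\mathbf Z$ as a direct summand. *)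

(* Defs.v *)
From HB Require Import structures.
From mathcomp Require Import all_boot all_order all_algebra.
Set Implicit Arguments. Unset Strict Implicit. Unset Printing Implicit Defensive.
Import Order.TTheory GRing.Theory Num.Theory.
Local Open Scope ring_scope.

Section Simplicial.
Variable V : finType.

(* A finite simplicial complex on the vertex type V: a down-closed family of
   finite vertex sets.  If nonempty it contains the empty simplex set0
   (dimension -1).  A face s has dimension #|s| - 1. *)
Definition is_complex (S : {set {set V}}) : Prop :=
  forall s t : {set V}, s \in S -> t \subset s -> t \in S.

(* dimS S = (dim S) + 1 = largest cardinality of a face. *)
Definition dimS (S : {set {set V}}) : nat := (\max_(s in S) #|s|)%N.

Definition cost (S : {set {set V}}) (sg : {set V}) : {set {set V}} :=
  [set t in S | ~~ (sg \subset t)].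

Definition chain := {ffun {set V} -> int}.

(* oriented incidence number [s : t]; simplices oriented by the enumeration
   order of V; the sign of deleting v is (-1)^(number of vertices of s below v) *)
Definition incid (s t : {set V}) : int :=
  \sum_(v in s | t == s :\ v)
     (-1) ^+ #|[set u in s | (enum_rank u < enum_rank v)%N]|.

(* simplicial boundary; the boundary of a vertex is the empty simplex
   (augmentation), so homology is augmental (reduced) homology *)
Definition bdry (c : chain) : chain :=
  [ffun t => \sum_(s : {set V}) c s * incid s t].

(* relative chains of C_k(S, G), with k = cardinality = degree + 1 *)
Definition supported (S G : {set {set V}}) (k : nat) (c : chain) : Prop :=
  forall s, c s != 0 -> [&& s \in S, s \notin G & #|s| == k].

Definition rcycle (S G : {set {set V}}) (k : nat) (c : chain) : Prop :=
  supported S G k c /\ forall t, t \in S -> t \notin G -> bdry c t = 0.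

Definition rbound (S G : {set {set V}}) (k : nat) (c : chain) : Prop :=
  supported S G k c /\
  exists d, supported S G k.+1 d /\
    forall s, s \in S -> s \notin G -> c s = bdry d s.

Definition chain_add (c d : chain) : chain := [ffun s => c s + d s].
Definition chain_sub_mul (c : chain) (m : int) (z : chain) : chain :=
  [ffun s => c s - m * z s].
Definition chain_mul (m : int) (z : chain) : chain := [ffun s => m * z s].

(* H_{k-1}(S, G; Z) = 0 *)
Definition Hzero (S G : {set {set V}}) (k : nat) : Prop :=
  forall c, rcycle S G k c -> rbound S G k c.

(* H_{k-1}(S, G; Z) is isomorphic to Z (infinite cyclic, generated by [z]) *)
Definition HisZ (S G : {set {set V}}) (k : nat) : Prop :=
  exists z, rcycle S G k z /\
    (forall c, rcycle S G k c -> exists m : int, rbound S G k (chain_sub_mul c m z)) /\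
    (forall m : int, rbound S G k (chain_mul m z) -> m = 0).

(* Z is a direct summand of H_{k-1}(S, G; Z), i.e. there is a surjective
   homomorphism H_{k-1}(S,G;Z) -> Z (which splits since Z is free) *)
Definition HZsummand (S G : {set {set V}}) (k : nat) : Prop :=
  exists (z : chain) (phi : chain -> int),
    rcycle S G k z /\ phi z = 1 /\
    (forall c d, rcycle S G k c -> rcycle S G k d ->
       phi (chain_add c d) = phi c + phi d) /\
    (forall b, rbound S G k b -> phi b = 0).

Definition connected_cx (S : {set {set V}}) : Prop :=
  (exists v, [set v] \in S) /\
  forall u v, [set u] \in S -> [set v] \in S ->
    connect (fun a b => [set a; b] \in S) u v.

(* simplicial homology_Z n-manifold, n = dim S; the point x of |S| ranges over
   relative interiors of nonempty faces s, and
   H_i(|S|, |S| \ x; Z) = H_i(S, cost_S s; Z). *)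
Definition hmanifold (S : {set {set V}}) : Prop :=
  is_complex S /\
  [\/ exists a b : V, a != b /\ S = [set set0; [set a]; [set b]],
      S = [set set0]
    | connected_cx S /\
      (forall s, s \in S -> s != set0 ->
         (forall k, k != dimS S -> Hzero S (cost S s) k) /\
         (Hzero S (cost S s) (dimS S) \/ HisZ S (cost S s) (dimS S))) /\
      (exists s, [/\ s \in S, s != set0 & HisZ S (cost S s) (dimS S)])].

Definition CM_Z (S : {set {set V}}) : Prop :=
  (forall s, s \in S -> s != set0 -> forall k, k != dimS S -> Hzero S (cost S s) k) /\
  (forall k, k != dimS S -> Hzero S set0 k) /\
  (exists s, [/\ s \in S, s != set0 & HZsummand S (cost S s) (dimS S)]).

Definition is_Bd (S B : {set {set V}}) : Prop :=
  forall s, s \in B <-> (s \in S /\ Hzero S (cost S s) (dimS S)).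

Definition orientable_Z (S : {set {set V}}) : Prop :=
  exists B, is_Bd S B /\ HisZ S B (dimS S).

End Simplicial.

(* Main.v *)
Require Import Defs.
From mathcomp Require Import all_boot all_order all_algebra.
From mathcomp Require Import zify ring lra.
From Stdlib Require Import ClassicalEpsilon.
Set Implicit Arguments. Unset Strict Implicit. Unset Printing Implicit Defensive.
Import Order.TTheory GRing.Theory Num.Theory.
Local Open Scope ring_scope.

Lemma z2_cases (x : 'Z_2) : x = 0 \/ x = 1.
Proof. by case: x => [[|[|n]] //= H]; [left|right]; apply/val_inj. Qed.
Lemma z2_11 : (1 + 1 : 'Z_2) = 0. Proof. by apply/val_inj. Qed.
Lemma z2_m1 : ((-1 : int)%:~R : 'Z_2) = 1. Proof. by apply/val_inj. Qed.
Lemma z2_opp (x : 'Z_2) : - x = x.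
Proof. by case: (z2_cases x) => ->; apply/val_inj. Qed.

Lemma sign_sq k : ((-1 : int) ^+ k) * ((-1) ^+ k) = 1.
Proof. by rewrite -exprD addnn -signr_odd odd_double. Qed.

Lemma sign_z2 k : (((-1 : int) ^+ k)%:~R : 'Z_2) = 1.
Proof. by rewrite rmorphXn /= z2_m1 expr1n. Qed.

Definition pb (P : Prop) : bool := if excluded_middle_informative P then true else false.
Lemma pbP (P : Prop) : pb P <-> P.
Proof. by rewrite /pb; case: excluded_middle_informative. Qed.

Section Basic.
Variable V : finType.
Implicit Types (s t x e f : {set V}) (c d : chain V).

Definition rk (u v : V) := (enum_rank u < enum_rank v)%N.

Lemma incid_del x v : v \in x ->
  incid x (x :\ v) = (-1) ^+ #|[set u in x | (enum_rank u < enum_rank v)%N]|.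
Proof.
move=> vx; rewrite /incid (bigD1 v) /=; last by rewrite vx eqxx.
rewrite big1 ?addr0 // => u /andP[/andP[ux /eqP e] uv].
have : v \in x :\ u by rewrite !inE eq_sym uv vx.
by rewrite -e !inE eqxx.
Qed.

Lemma incid_pm1 x v : v \in x -> incid x (x :\ v) * incid x (x :\ v) = 1.
Proof. by move=> vx; rewrite incid_del // sign_sq. Qed.

Lemma incid_nz x t : incid x t != 0 -> exists2 v, v \in x & t = x :\ v.
Proof.
case: (pickP [pred v | (v \in x) && (t == x :\ v)]) => [v /andP[vx /eqP ->] _| none].
  by exists v.
by rewrite /incid big_pred0 ?eqxx.
Qed.

Lemma incid_sub x t : incid x t != 0 -> t \subset x /\ #|t| = (#|x|).-1.
Proof.
case/incid_nz => v vx ->; split; first exact: subD1set.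
by rewrite (cardsD1 v x) vx.
Qed.

Lemma incid_z2 x t : ((incid x t)%:~R : 'Z_2) = (#|[set v in x | t == x :\ v]|)%:R.
Proof.
rewrite /incid rmorph_sum /=.
rewrite (eq_bigr (fun _ => 1)); last by move=> v _; rewrite sign_z2.
by rewrite sumr_const cardsE.
Qed.

End Basic.

Definition h2 (z : int) : 'Z_2 := (z != 1)%:R.
Definition sg2 (x : 'Z_2) : int := if x == 0 then 1 else -1.

Lemma pm1_cases' (z : int) : z * z = 1 -> z = 1 \/ z = -1.
Proof. by move=> h; have := sqrf_eq1 z; rewrite expr2 h eqxx => /esym/orP[]/eqP; [left|right]. Qed.

Lemma h2M x y : x * x = 1 -> y * y = 1 -> h2 (x * y) = h2 x + h2 y.
Proof. by move=> /pm1_cases' [] -> /pm1_cases' [] ->; apply/val_inj. Qed.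

Lemma sg2D x y : sg2 (x + y) = sg2 x * sg2 y.
Proof. by case: (z2_cases x) => ->; case: (z2_cases y) => ->. Qed.

Lemma sg2h z : z * z = 1 -> sg2 (h2 z) = z.
Proof. by move=> /pm1_cases' [] ->. Qed.

Lemma sg2pm x : sg2 x * sg2 x = 1.
Proof. by rewrite /sg2; case: (_ == _); rewrite ?mulr1 ?mulrNN ?mulr1. Qed.

Lemma pm4 (X Y p q : int) : X * X = 1 -> Y * Y = 1 -> p * p = 1 -> q * q = 1 ->
  X * Y = p * q -> X * p = Y * q.
Proof.
by move=> /pm1_cases' [] -> /pm1_cases' [] -> /pm1_cases' [] -> /pm1_cases' [] -> //.
Qed.

Lemma z2_eq x y : x + y = 0 -> x = y :> 'Z_2.
Proof. by case: (z2_cases x) => ->; case: (z2_cases y) => ->. Qed.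

Lemma incid_z2' (V : finType) (x t : {set V}) :
  ((incid x t)%:~R : 'Z_2) = \sum_(v in x | t == x :\ v) 1.
Proof. by rewrite /incid rmorph_sum; apply: eq_bigr => v _; exact: sign_z2. Qed.

Lemma tri (V : finType) (A : {set V}) (H : V -> 'Z_2) : #|A| = 3 ->
  \sum_(v in A) \sum_(u in A :\ v) H u = 0.
Proof.
move=> cA.
have E (B : {set V}) (G : V -> V -> 'Z_2) :
    \sum_(v in B) \sum_(u in B :\ v) G v u =
    \sum_v \sum_u (if (v \in B) && (u \in B :\ v) then G v u else 0).
  rewrite big_mkcond; apply: eq_bigr => v _; case: (v \in B) => /=.
    by rewrite big_mkcond.
  by rewrite big1.
transitivity (\sum_(u in A) \sum_(v in A :\ u) H u).
  rewrite (E A (fun v u => H u)) (E A (fun u v => H u)) exchange_big /=.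
  apply: eq_bigr => u _; apply: eq_bigr => v _.
  rewrite !inE; case: (u \in A); case: (v \in A); rewrite /= ?andbF ?andbT //.
  by rewrite eq_sym.
apply: big1 => u uA; rewrite sumr_const.
have -> : #|A :\ u| = 2 by move: cA; rewrite (cardsD1 u A) uA => -[].
by case: (z2_cases (H u)) => ->; apply/val_inj.
Qed.
Section D2.
Variable V : finType.
Implicit Types (s t x e f : {set V}).

Lemma cnt_U1 (P : pred V) (a : V) (X : {set V}) : a \notin X ->
  #|[set u in a |: X | P u]| = (P a + #|[set u in X | P u]|)%N.
Proof.
move=> aX.
have -> : [set u in a |: X | P u] =
   (if P a then a |: [set u in X | P u] else [set u in X | P u]).
  apply/setP => u; case Pa: (P a); rewrite !inE; case: eqP => [->|_] //=;
  by rewrite ?Pa ?(negbTE aX).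
case: (P a); last by [].
by rewrite cardsU1 inE (negbTE aX).
Qed.

Lemma setU1D1 (a : V) (X : {set V}) : a \notin X -> (a |: X) :\ a = X.
Proof.
move=> aX; apply/setP => u; rewrite !inE; case: eqP => [->|] //=.
by rewrite (negbTE aX).
Qed.

Lemma incid_U1 a s : a \notin s ->
  incid (a |: s) s = (-1) ^+ #|[set u in s | (enum_rank u < enum_rank a)%N]|.
Proof.
move=> as_; rewrite -{2}(setU1D1 as_) incid_del ?setU11 // cnt_U1 //= ltnn.
by [].
Qed.

Lemma d2_local s a b : a \notin s -> b \notin s -> a != b ->
  incid (a |: (b |: s)) (a |: s) * incid (a |: s) s +
  incid (a |: (b |: s)) (b |: s) * incid (b |: s) s = 0.
Proof.
move=> as_ bs ab.
have e1 : a |: s = (a |: (b |: s)) :\ b.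
  apply/setP => u; rewrite !inE; case: (eqVneq u b) => [->|] /=.
    by rewrite eq_sym (negbTE ab) (negbTE bs).
  by [].
have e2 : b |: s = (a |: (b |: s)) :\ a.
  apply/setP => u; rewrite !inE; case: (eqVneq u a) => [->|] /=.
    by rewrite (negbTE ab) (negbTE as_).
  by [].
set E := a |: (b |: s).
have -> : incid E (a |: s) = incid E (E :\ b) by rewrite -e1.
have -> : incid E (b |: s) = incid E (E :\ a) by rewrite -e2.
rewrite !incid_del ?inE ?eqxx ?orbT // !incid_U1 //.
have abs : a \notin b |: s by rewrite !inE negb_or as_ andbT.
rewrite /E !(cnt_U1 _ abs) !(cnt_U1 _ bs) /= !ltnn /= !add0n.
set A := #|_|; set B := #|_|.
case: (ltngtP (enum_rank a) (enum_rank b)) => h.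
- rewrite /= ?exprD ?expr1 ?expr0.
  ring.
- rewrite /= ?exprD ?expr1 ?expr0.
  ring.
- by move/val_inj/enum_rank_inj: h => h; rewrite h eqxx in ab.
Qed.
End D2.

Lemma sum_nz (I : finType) (P : pred I) (F : I -> int) :
  \sum_(i | P i) F i != 0 -> exists2 i, P i & F i != 0.
Proof.
move=> H; case: (pickP [pred i | P i && (F i != 0)]) => [i /andP[]|none].
  by exists i.
move/eqP: H; case; apply: big1 => i Pi; move: (none i) => /=.
by rewrite Pi /= => /negbFE/eqP.
Qed.

Section Main.
Variable V : finType.
Variable S : {set {set V}}.
Hypothesis HS : is_complex S.
Local Notation N := (dimS S).
Hypothesis Hloc : forall s, s \in S -> forall k, k != N -> Hzero S (cost S s) k.

Implicit Types (s t x e f r : {set V}) (c d w : {set V} -> int).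

Lemma card_le s : s \in S -> (#|s| <= N)%N.
Proof. by move=> sS; apply: (@leq_bigmax_cond _ (fun s => s \in S)). Qed.

Lemma in_cost s t : (t \in cost S s) = (t \in S) && ~~ (s \subset t).
Proof. by rewrite /cost inE. Qed.

Lemma notin_cost s t : s \subset t -> t \notin cost S s.
Proof. by move=> st; rewrite in_cost st andbF. Qed.

Lemma up s : s \in S -> (#|s| < N)%N -> exists2 v, v \notin s & v |: s \in S.
Proof.
move=> sS ltN.
have kN : #|s| != N by rewrite neq_ltn ltN.
pose c : chain V := [ffun t => (t == s)%:Z].
have cyc : rcycle S (cost S s) #|s| c.
  split.
    move=> t; rewrite ffunE; case: (@eqP _ t s) => [->|] // _.
    by rewrite sS notin_cost ?eqxx.
  move=> t tS tc; rewrite /bdry ffunE (bigD1 s) //= big1 ?ffunE ?eqxx ?mul1r ?addr0.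
    apply/eqP; apply: contraT => /incid_nz [v vs et].
    move: tc; rewrite in_cost tS /= negbK => /subsetP/(_ v vs).
    by rewrite et !inE eqxx.
  by move=> x xs; rewrite ffunE (negbTE xs) mul0r.
have [_ [d [dsup dE]]] := Hloc sS kN cyc.
have := dE s sS (notin_cost (subxx s)).
rewrite ffunE eqxx /bdry ffunE => /esym H1.
have : \sum_(x : {set V}) d x * incid x s != 0 by rewrite H1.
case/(@sum_nz _ predT) => x _; rewrite mulf_eq0 negb_or => /andP[dx ix].
have /and3P[xS _ /eqP cx] := dsup x dx.
have [v vx sx] := incid_nz ix.
exists v; first by rewrite sx !inE eqxx.
by rewrite sx setD1K.
Qed.

Definition Fs r := [set f in S | (#|f| == N) && (r \subset f)].

Lemma in_Fs r f : (f \in Fs r) = [&& f \in S, #|f| == N & r \subset f].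
Proof. by rewrite inE. Qed.

Lemma pure s : s \in S -> exists f, f \in Fs s.
Proof.
move=> sS0; suff : forall n s0, s0 \in S -> (N - #|s0| <= n)%N -> exists f, f \in Fs s0.
  by move/(_ _ s sS0 (leqnn _)).
clear sS0; elim=> [|n IH] {}s sS hn.
  exists s; rewrite in_Fs sS subxx andbT eqn_leq card_le //=.
  by rewrite -subn_eq0 -leqn0.
case: (ltnP #|s| N) => [lt|ge]; last first.
  by exists s; rewrite in_Fs sS subxx andbT eqn_leq card_le.
have [v vs vS] := up sS lt.
have hn' : (N - #|v |: s| <= n)%N.
  by rewrite cardsU1 vs add1n; move: hn lt; lia.
have [f] := IH _ vS hn'.
rewrite in_Fs => /and3P[fS fN sf]; exists f.
by rewrite in_Fs fS fN (subset_trans _ sf) // subsetUr.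
Qed.


Definition flux c r := \sum_(f in Fs r) c f * incid f r.
Definition cons s c := forall r, r \in S -> s \subset r -> #|r| = N.-1 ->
  (1 < #|Fs r|)%N -> flux c r = 0.
Definition Q s := exists w, (forall f, f \in Fs s -> w f * w f = 1) /\ cons s w /\
  (forall c, cons s c -> exists m : int, forall f, f \in Fs s -> c f = m * w f).

Lemma Fs_mono s t f : s \subset t -> f \in Fs t -> f \in Fs s.
Proof. by move=> st; rewrite !in_Fs => /and3P[-> -> /(subset_trans st) ->]. Qed.

Lemma cons_mono s t c : s \subset t -> cons s c -> cons t c.
Proof. by move=> st H r rS tr; apply: H => //; apply: subset_trans tr. Qed.

Lemma Prod0 t c d : Q t -> cons t c -> cons t d -> forall f g, f \in Fs t -> g \in Fs t ->
  c f * d f = c g * d g.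
Proof.
case=> w [wpm [_ wall]] cc cd.
have [mc Hc] := wall c cc; have [md Hd] := wall d cd.
have E f : f \in Fs t -> c f * d f = mc * md.
  by move=> fF; rewrite (Hc f fF) (Hd f fF) mulrACA (wpm f fF) mulr1.
by move=> f g fF gF; rewrite !E.
Qed.

Lemma sum_delta (A : {set V}) (F : {set V} -> int) :
  \sum_(x : {set V}) (x == A)%:Z * F x = F A.
Proof.
rewrite (bigD1 A) //= eqxx mul1r big1 ?addr0 // => x /negbTE -> .
by rewrite mul0r.
Qed.

Lemma bdry_out (d : chain V) t : (forall x, d x != 0 -> x \in S) -> t \notin S -> bdry d t = 0.
Proof.
move=> dS tS; rewrite /bdry ffunE big1 // => x _.
case: (eqVneq (d x) 0) => [->|dx]; first by rewrite mul0r.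
case: (eqVneq (incid x t) 0) => [->|ix]; first by rewrite mulr0.
have [sub _] := incid_sub ix.
by rewrite (HS (dS x dx) sub) in tS.
Qed.

Lemma incid_U1_only a s t : a \notin s -> s \subset t -> incid (a |: s) t != 0 -> t = s.
Proof.
move=> as_ st /incid_nz [u uin tE]; rewrite tE in st *.
case: (eqVneq u a) => [->|ua]; first by rewrite setU1D1.
move: uin; rewrite !inE (negbTE ua) /= => us.
by move: (subsetP st u us); rewrite !inE eqxx.
Qed.

Lemma U1_eq a v s : a \notin s -> v \notin s -> (v |: s == a |: s) = (v == a).
Proof.
move=> as_ vs; apply/eqP/eqP => [E|->] //.
have : v \in a |: s by rewrite -E setU11.
by rewrite !inE (negbTE vs) orbF => /eqP.
Qed.

Lemma card_U1 a s : a \notin s -> #|a |: s| = (#|s|).+1.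
Proof. by move=> as_; rewrite cardsU1 as_. Qed.

Lemma decomp2 s x : s \subset x -> #|x| = (#|s|).+2 ->
  exists a b, [/\ a \notin s, b \notin s, a != b & x = a |: (b |: s)].
Proof.
move=> sx cx.
have : #|x :\: s| == 2%N by rewrite cardsD (setIidPr sx) cx -addn2 addKn.
case/cards2P => a [b [ab E]].
have : a \in x :\: s by rewrite E !inE eqxx.
have : b \in x :\: s by rewrite E !inE eqxx orbT.
rewrite !inE => /andP[bs _] /andP[as_ _].
exists a, b; split => //.
apply/setP => u; rewrite !inE.
case: (boolP (u \in s)) => us; first by rewrite !orbT (subsetP sx).
have : (u \in x :\: s) = (u \in x) by rewrite !inE us.
by rewrite E !inE orbF => <-.
Qed.

Lemma link_const s (g : V -> int) : s \in S -> (#|s|).+1 != N ->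
  (forall a b, a \notin s -> b \notin s -> a != b -> a |: (b |: s) \in S -> g a = g b) ->
  forall a b, a \notin s -> b \notin s -> a |: s \in S -> b |: s \in S -> g a = g b.
Proof.
move=> sS kN Hg a b as_ bs aS bS.
case: (eqVneq a b) => [->//|ab].
pose ia := incid (a |: s) s; pose ib := incid (b |: s) s.
pose c : chain V := [ffun t => (t == a |: s)%:Z * ia - (t == b |: s)%:Z * ib].
have ia2 : ia * ia = 1 by rewrite /ia incid_U1 // sign_sq.
have ib2 : ib * ib = 1 by rewrite /ib incid_U1 // sign_sq.
have cyc : rcycle S (cost S s) (#|s|.+1) c.
  split.
    move=> t; rewrite ffunE.
    case: (@eqP _ t (a |: s)) => [->|_].
      by move=> _; rewrite aS notin_cost ?subsetUr //= card_U1.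
    case: (@eqP _ t (b |: s)) => [->|_].
      by move=> _; rewrite bS notin_cost ?subsetUr //= card_U1.
    by rewrite !mul0r subrr eqxx.
  move=> t tS; rewrite in_cost tS negbK /= => st.
  rewrite /bdry ffunE.
  rewrite (eq_bigr (fun x => (x == a |: s)%:Z * (ia * incid x t) -
                             (x == b |: s)%:Z * (ib * incid x t))); last first.
    by move=> x _; rewrite ffunE mulrBl !mulrA.
  rewrite sumrB !sum_delta.
  case: (eqVneq t s) => [->|ts]; first by rewrite ia2 ib2 subrr.
  have -> : incid (a |: s) t = 0.
    by apply/eqP; apply: contraTT ts => /(incid_U1_only as_ st) ->; rewrite negbK.
  have -> : incid (b |: s) t = 0.
    by apply/eqP; apply: contraTT ts => /(incid_U1_only bs st) ->; rewrite negbK.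
  by rewrite !mulr0 subrr.
have [_ [d [dsup dE]]] := Hloc sS kN cyc.
have dS x : d x != 0 -> x \in S by case/dsup/and3P.
have cE v : v \notin s -> c (v |: s) = bdry d (v |: s).
  move=> vs; case: (boolP (v |: s \in S)) => vS.
    by apply: dE => //; apply: notin_cost; apply: subsetUr.
  rewrite bdry_out // ffunE.
  have -> : (v |: s == a |: s) = false.
    by apply/negbTE; apply: contraNneq vS => ->.
  have -> : (v |: s == b |: s) = false.
    by apply/negbTE; apply: contraNneq vS => ->.
  by rewrite !mul0r subrr.
pose psi (z : chain V) := \sum_(v | v \notin s) g v * z (v |: s) * incid (v |: s) s.
have psic : psi c = g a - g b.
  rewrite /psi (bigD1 a) //= (bigD1 b) /=; last by rewrite bs eq_sym.
  rewrite big1; last first.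
    move=> v /andP[/andP[vs va] vb]; rewrite ffunE !U1_eq //.
    by rewrite (negbTE va) (negbTE vb) !mul0r subrr mulr0 mul0r.
  rewrite !ffunE !U1_eq // eqxx (negbTE ab) eq_sym (negbTE ab) eqxx.
  rewrite addr0 /= !mul1r !mul0r subr0 sub0r -/ia -/ib.
  by rewrite -!mulrA ia2 mulNr ib2 mulr1 mulrN1.
have psid : psi c = 0.
  rewrite /psi (eq_bigr (fun v => \sum_(x : {set V}) d x *
                    (g v * incid x (v |: s) * incid (v |: s) s))); last first.
    move=> v vs; rewrite cE // /bdry ffunE [g v * _]mulr_sumr mulr_suml.
    by apply: eq_bigr => x _; ring.
  rewrite exchange_big /= big1 // => x _.
  case: (eqVneq (d x) 0) => [->|dx]; first by rewrite big1 // => v _; rewrite mul0r.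
  rewrite -mulr_sumr.
  have /and3P[xS xc /eqP cx] := dsup x dx.
  move: xc; rewrite in_cost xS negbK /= => sx.
  have [a' [b' [as' bs' ab' xE]]] := decomp2 sx cx.
  rewrite (bigD1 a') // (bigD1 b') /=; last by rewrite bs' eq_sym.
  rewrite big1; last first.
    move=> v /andP[/andP[vs va] vb].
    case: (eqVneq (incid x (v |: s)) 0) => [->|ix]; first by rewrite mulr0 mul0r.
    have [sub _] := incid_sub ix.
    have : v \in x by apply: (subsetP sub); rewrite setU11.
    by rewrite xE !inE (negbTE va) (negbTE vb) (negbTE vs).
  have gE : g a' = g b' by apply: Hg => //; rewrite -xE.
  rewrite addr0 gE -!mulrA -mulrDr xE d2_local //.
  by rewrite !mulr0.
by move: psic; rewrite psid => /eqP; rewrite eq_sym subr_eq0 => /eqP.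
Qed.

Hypothesis HN : (0 < N)%N.
Hypothesis Hridge : forall r, r \in S -> #|r| = N.-1 -> (#|Fs r| <= 2)%N.

Lemma sub_eq_card s f : s \subset f -> (#|f| <= #|s|)%N -> f = s.
Proof. by move=> sf cf; apply/eqP; rewrite eq_sym eqEcard sf. Qed.

Lemma decomp1 s x : s \subset x -> #|x| = (#|s|).+1 -> exists2 a, a \notin s & x = a |: s.
Proof.
move=> sx cx.
have : #|x :\: s| == 1%N by rewrite cardsD (setIidPr sx) cx -addn1 addKn.
case/cards1P => a E.
have : a \in x :\: s by rewrite E !inE.
rewrite !inE => /andP[as_ ax]; exists a => //.
apply/setP => u; rewrite !inE.
case: (boolP (u \in s)) => us; first by rewrite !orbT (subsetP sx).
have : (u \in x :\: s) = (u \in x) by rewrite !inE us.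
by rewrite E !inE orbF => <-.
Qed.

Lemma incid_pm1' s x : s \subset x -> #|x| = (#|s|).+1 -> incid x s * incid x s = 1.
Proof. by move=> sx cx; have [a as_ ->] := decomp1 sx cx; rewrite incid_U1 // sign_sq. Qed.

Lemma Fs_card r f : f \in Fs r -> #|f| = N.
Proof. by rewrite in_Fs => /and3P[_ /eqP -> _]. Qed.

Lemma Fs_sub r f : f \in Fs r -> r \subset f.
Proof. by rewrite in_Fs => /and3P[_ _ ->]. Qed.

Lemma Fs_S r f : f \in Fs r -> f \in S.
Proof. by rewrite in_Fs => /and3P[-> _ _]. Qed.

Lemma Q_facet s : s \in S -> #|s| = N -> Q s.
Proof.
move=> sS cs.
have Fs1 f : f \in Fs s -> f = s.
  by move=> fF; apply: sub_eq_card (Fs_sub fF) _; rewrite (Fs_card fF) cs.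
exists (fun _ => 1); split; first by move=> *; rewrite mulr1.
split.
  move=> r rS sr cr; have := subset_leq_card sr; rewrite cr cs.
  by move: HN; case: N => // n _; rewrite ltnn.
by move=> c _; exists (c s); move=> f /Fs1 ->; rewrite mulr1.
Qed.

Lemma flux2 c r f1 f2 : Fs r = [set f1; f2] -> f1 != f2 ->
  flux c r = c f1 * incid f1 r + c f2 * incid f2 r.
Proof.
move=> E ne; rewrite /flux E big_setU1 ?big_set1 //=.
by rewrite inE.
Qed.

Lemma cons_ridge r c : r \in S -> #|r| = N.-1 ->
  cons r c <-> ((1 < #|Fs r|)%N -> flux c r = 0).
Proof.
move=> rS cr; split; first by move=> H; apply: H.
move=> H r' r'S rr' cr' m; have E : r' = r.
  by apply: sub_eq_card rr' _; rewrite cr' cr.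
by rewrite E in m *; apply: H.
Qed.

Lemma Q_ridge r : r \in S -> #|r| = N.-1 -> Q r.
Proof.
move=> rS cr.
have ipm f : f \in Fs r -> incid f r * incid f r = 1.
  move=> fF; apply: incid_pm1' (Fs_sub fF) _.
  by rewrite (Fs_card fF) cr prednK.
have := Hridge rS cr; rewrite leq_eqVlt ltnS => /orP[two|le1].
- case/cards2P: two => f1 [f2 [ne E]].
  have f1F : f1 \in Fs r by rewrite E !inE eqxx.
  have f2F : f2 \in Fs r by rewrite E !inE eqxx orbT.
  have i11 := ipm _ f1F; have i22 := ipm _ f2F.
  set i1 := incid f1 r in i11 *; set i2 := incid f2 r in i22 *.
  have n21 : (f2 == f1) = false by apply/negbTE; rewrite eq_sym.
  exists (fun f => if f == f1 then 1 else - (i1 * i2)); split.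
    move=> f; rewrite E !inE => /orP[]/eqP ->; rewrite ?eqxx ?mulr1 // n21.
    by rewrite mulrNN mulrACA i11 i22 mulr1.
  split.
    apply/cons_ridge => // _; rewrite (flux2 _ E ne) eqxx n21 -/i1 -/i2.
    by rewrite mul1r mulNr -mulrA i22 mulr1 subrr.
  move=> c /(cons_ridge _ rS cr) H.
  exists (c f1) => f; rewrite E !inE => /orP[]/eqP->.
    by rewrite eqxx mulr1.
  rewrite n21.
  have := H; rewrite E cards2 ne => /(_ isT).
  rewrite (flux2 _ E ne) -/i1 -/i2 => /eqP; rewrite addr_eq0 => /eqP h.
  by rewrite mulrN mulrA h mulNr opprK -mulrA i22 mulr1.
- exists (fun _ => 1); split; first by move=> *; rewrite mulr1.
  split.
    by apply/cons_ridge => // lt; rewrite ltnNge le1 in lt.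
  move=> c _; case: (set_0Vmem (Fs r)) => [E | [f0 f0F]].
    by exists 0 => f; rewrite E inE.
  exists (c f0) => f fF; rewrite mulr1.
  by move/card_le1_eqP: le1 => /(_ f f0 fF f0F) ->.
Qed.

Definition linkQ s := forall v, v \notin s -> v |: s \in S -> Q (v |: s).

Lemma exists_link_in s f : f \in Fs s -> (#|s| < N)%N ->
  exists2 v, v \notin s & f \in Fs (v |: s).
Proof.
move=> fF lt.
have : (0 < #|f :\: s|)%N.
  rewrite cardsD (setIidPr (Fs_sub fF)) (Fs_card fF) subn_gt0 //.
case/card_gt0P => v; rewrite !inE => /andP[vs vf].
exists v => //; rewrite in_Fs (Fs_S fF) (Fs_card fF) eqxx /=.
by rewrite subUset sub1set vf (Fs_sub fF).
Qed.

Lemma prod_const s c d : s \in S -> (#|s|.+2 <= N)%N -> linkQ s ->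
  cons s c -> cons s d -> forall f g, f \in Fs s -> g \in Fs s ->
  c f * d f = c g * d g.
Proof.
move=> sS le lQ cc cd.
pose pf v := odflt set0 [pick f in Fs (v |: s)].
pose G v := c (pf v) * d (pf v).
have H1 v f : v \notin s -> f \in Fs (v |: s) -> c f * d f = G v.
  move=> vs fF.
  have vS : v |: s \in S by apply: HS (Fs_S fF) (Fs_sub fF).
  have pF : pf v \in Fs (v |: s).
    by rewrite /pf; case: pickP => [g ->|/(_ f)] //=; rewrite fF.
  have sv : s \subset v |: s by apply: subsetUr.
  by apply: (Prod0 (lQ v vs vS)) => //; apply: cons_mono sv _.
have Gc : forall a b, a \notin s -> b \notin s -> a |: s \in S -> b |: s \in S -> G a = G b.
  apply: link_const => //; first by rewrite neq_ltn ltnS le.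
  move=> a b as_ bs ab eS.
  have [f fF] := pure eS.
  have fa : f \in Fs (a |: s) by apply: Fs_mono fF; apply: setUS; apply: subsetUr.
  have fb : f \in Fs (b |: s) by apply: Fs_mono fF; apply: subsetUr.
  by rewrite -(H1 a f) // -(H1 b f).
have lt : (#|s| < N)%N by apply: leq_trans le; rewrite ltnS leqnSn.
move=> f g fF gF.
have [v vs vF] := exists_link_in fF lt.
have [u us uF] := exists_link_in gF lt.
rewrite (H1 v f) // (H1 u g) //; apply: Gc => //.
  exact: HS (Fs_S vF) (Fs_sub vF).
exact: HS (Fs_S uF) (Fs_sub uF).
Qed.

Lemma Q_of_w s w : s \in S -> (#|s|.+2 <= N)%N -> linkQ s ->
  (forall f, f \in Fs s -> w f * w f = 1) -> cons s w -> Q s.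
Proof.
move=> sS le lQ wpm cw; exists w; split => //; split => // c cc.
have [f0 f0F] := pure sS.
exists (c f0 * w f0) => f fF.
rewrite -(prod_const sS le lQ cc cw fF f0F).
by rewrite -mulrA wpm // mulr1.
Qed.

Lemma flux_bdry (x : chain V) r : (forall T, x T != 0 -> T \in S /\ #|T| = N) ->
  flux x r = bdry x r.
Proof.
move=> H; rewrite /bdry ffunE /flux.
rewrite [RHS](bigID (fun T => T \in Fs r)) /= [X in _ = _ + X]big1 ?addr0 //.
move=> T TnF.
case: (eqVneq (x T) 0) => [->|xT]; first by rewrite mul0r.
case: (eqVneq (incid T r) 0) => [->|iT]; first by rewrite mulr0.
have [TS cT] := H T xT; have [sub _] := incid_sub iT.
by rewrite in_Fs TS cT eqxx sub in TnF.
Qed.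

Definition Rs s := [set r in S | (s \subset r) && (#|r| == N.-1)].

Lemma in_Rs s r : (r \in Rs s) = [&& r \in S, s \subset r & #|r| == N.-1].
Proof. by rewrite inE. Qed.

Lemma DD s c : s \in S -> #|s|.+2 = N ->
  \sum_(r in Rs s) flux c r * incid r s = 0.
Proof.
move=> sS cs.
transitivity (\sum_(r in Rs s) \sum_(f in Fs s)
                 (r \subset f)%:Z * (c f * incid f r * incid r s)).
  apply: eq_bigr => r; rewrite in_Rs => /and3P[rS sr _].
  rewrite /flux big_distrl /= big_mkcond [RHS]big_mkcond /=.
  apply: eq_bigr => f _.
  rewrite !in_Fs; case: (boolP (r \subset f)) => rf.
    by rewrite (subset_trans sr rf) !andbT mul1r.
  by rewrite !andbF mul0r; case: (_ && _).
rewrite exchange_big /=; apply: big1 => f fF.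
have cf : #|f| = (#|s|).+2 by rewrite (Fs_card fF) cs.
have [a [b [as_ bs ab fE]]] := decomp2 (Fs_sub fF) cf.
have fS := Fs_S fF.
have aR : a |: s \in Rs s.
  rewrite in_Rs subsetUr card_U1 // -cs /= eqxx andbT.
  by apply: HS fS _; rewrite fE; apply: setUS; apply: subsetUr.
have bR : b |: s \in Rs s.
  rewrite in_Rs subsetUr card_U1 // -cs /= eqxx andbT.
  by apply: HS fS _; rewrite fE; apply: subsetUr.
have neab : (b |: s == a |: s) = false by rewrite U1_eq // eq_sym (negbTE ab).
rewrite (bigD1 (a |: s)) // (bigD1 (b |: s)) /=; last by rewrite bR neab.
rewrite big1 ?addr0; last first.
  move=> r /andP[/andP[rR ra] rb].
  case: (boolP (r \subset f)) => rf; last by rewrite mul0r.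
  move: rR; rewrite in_Rs => /and3P[_ sr /eqP cr].
  have cr' : #|r| = #|s|.+1 by rewrite cr -cs.
  have [x xs rE] := decomp1 sr cr'.
  have : x \in f by apply: (subsetP rf); rewrite rE setU11.
  rewrite fE !inE => /or3P[/eqP xE|/eqP xE|xs'].
  - by rewrite rE xE eqxx in ra.
  - by rewrite rE xE eqxx in rb.
  - by rewrite xs' in xs.
have -> : a |: s \subset f by rewrite fE; apply: setUS; apply: subsetUr.
have -> : b |: s \subset f by rewrite fE; apply: subsetUr.
rewrite !mul1r -!mulrA -mulrDr fE d2_local //.
by rewrite mulr0.
Qed.

Definition hf (z : int) : int := if z == 2 then 1 else if z == -2 then -1 else 0.
Lemma pm1_cases (z : int) : z * z = 1 -> z = 1 \/ z = -1.
Proof. by move=> h; have := sqrf_eq1 z; rewrite expr2 h eqxx => /esym/orP[]/eqP; [left|right]. Qed.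
Lemma hfE (i j : int) : i * i = 1 -> j * j = 1 -> 2 * hf (i + j) = i + j.
Proof. by move=> /pm1_cases [] -> /pm1_cases [] ->. Qed.

Lemma Q_codim2 s : s \in S -> #|s|.+2 = N -> linkQ s -> Q s.
Proof.
move=> sS cs lQ.
have le : (#|s|.+2 <= N)%N by rewrite cs.
pose one f : int := (f \in Fs s)%:Z.
pose yb r : int := if (1 < #|Fs r|)%N then hf (flux one r) else 0.
have ridge2 r : r \in Rs s -> (1 < #|Fs r|)%N -> 2 * yb r = flux one r.
  move=> rR lt; rewrite /yb lt.
  move: rR; rewrite in_Rs => /and3P[rS sr /eqP cr].
  have := Hridge rS cr; rewrite leq_eqVlt ltnS leqNgt lt orbF.
  case/cards2P => f1 [f2 [ne E]].
  rewrite (flux2 _ E ne).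
  have f1F : f1 \in Fs r by rewrite E !inE eqxx.
  have f2F : f2 \in Fs r by rewrite E !inE eqxx orbT.
  have ip f : f \in Fs r -> incid f r * incid f r = 1.
    by move=> fF; apply: incid_pm1' (Fs_sub fF) _; rewrite (Fs_card fF) cr prednK.
  have o f : f \in Fs r -> one f = 1 by move=> fF; rewrite /one (Fs_mono sr fF).
  by rewrite !o // !mul1r; apply: hfE; apply: ip.
have ipR r : r \in Rs s -> incid r s * incid r s = 1.
  rewrite in_Rs => /and3P[_ sr /eqP cr]; apply: incid_pm1' sr _.
  by rewrite cr -cs.
have [y [Y1 Y2 Y3]] : exists y : chain V, [/\ (forall r, y r != 0 -> r \in Rs s),
     (forall r, r \in Rs s -> (1 < #|Fs r|)%N -> y r = yb r) &
     \sum_(r in Rs s) y r * incid r s = 0].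
  set Sum0 := \sum_(r in Rs s) yb r * incid r s.
  case: (pickP [pred r | (r \in Rs s) && (#|Fs r| <= 1)%N]) => [r1 /andP[r1R r1le] | none].
  - exists [ffun r => if r \in Rs s then yb r + (r == r1)%:Z * (- Sum0 * incid r1 s) else 0].
    split.
    + by move=> r; rewrite ffunE; case: (r \in Rs s); rewrite ?eqxx.
    + move=> r rR lt; rewrite ffunE rR.
      have -> : (r == r1) = false.
        by apply/negbTE; apply: contraTneq lt => ->; rewrite -leqNgt.
      by rewrite mul0r addr0.
    + rewrite (eq_bigr (fun r => yb r * incid r s +
                 (r == r1)%:Z * (- Sum0 * incid r1 s * incid r s))); last first.
        by move=> r rR; rewrite ffunE rR mulrDl -mulrA.
      rewrite big_split /= -/Sum0.
      rewrite (bigD1 r1) //= eqxx mul1r big1 ?addr0; last first.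
        by move=> r /andP[_ /negbTE ->]; rewrite mul0r.
      by rewrite -mulrA ipR // mulr1 subrr.
  - have lt r : r \in Rs s -> (1 < #|Fs r|)%N.
      by move=> rR; move: (none r); rewrite /= rR /= ltnNge => ->.
    exists [ffun r => if r \in Rs s then yb r else 0]; split.
    + by move=> r; rewrite ffunE; case: (r \in Rs s); rewrite ?eqxx.
    + by move=> r rR _; rewrite ffunE rR.
    + have E2 : 2 * (\sum_(r in Rs s) [ffun r => if r \in Rs s then yb r else 0] r * incid r s)
              = \sum_(r in Rs s) flux one r * incid r s.
        rewrite mulr_sumr; apply: eq_bigr => r rR; rewrite ffunE rR mulrA ridge2 //.
        exact: lt.
      rewrite DD // in E2.
      by move/eqP: E2; rewrite mulf_eq0 /= => /eqP.
have cN : N.-1 != N by move: HN; lia.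
have cyc : rcycle S (cost S s) N.-1 y.
  split.
    move=> r /Y1; rewrite in_Rs => /and3P[rS sr cr].
    by rewrite rS notin_cost.
  move=> t tS; rewrite in_cost tS negbK /= => st.
  rewrite /bdry ffunE.
  case: (eqVneq t s) => [->|ts].
    rewrite [LHS](bigID (fun r => r \in Rs s)) /= [X in _ + X]big1 ?addr0 //.
    move=> r /negP rn; case: (eqVneq (y r) 0) => [->|yr]; first by rewrite mul0r.
    by case: rn; apply: Y1.
  apply: big1 => r _.
  case: (eqVneq (y r) 0) => [->|yr]; first by rewrite mul0r.
  case: (eqVneq (incid r t) 0) => [->|it]; first by rewrite mulr0.
  have := Y1 _ yr; rewrite in_Rs => /and3P[_ sr /eqP cr].
  have [tr ct] := incid_sub it.
  exfalso; move/negP: ts; apply; apply/eqP; apply: sub_eq_card st _.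
  by rewrite ct cr -cs.
have [_ [x [xsup xE]]] := Hloc sS cN cyc.
have xF T : x T != 0 -> T \in Fs s.
  move/xsup/and3P => [TS Tc /eqP cT]; move: Tc; rewrite in_cost TS negbK /= => sT.
  by rewrite in_Fs TS sT cT prednK // eqxx.
pose u f := one f - 2 * x f.
have ucons : cons s u.
  move=> r rS sr cr lt.
  have rR : r \in Rs s by rewrite in_Rs rS sr cr eqxx.
  have fx : flux x r = y r.
    rewrite flux_bdry; first by rewrite -xE // notin_cost.
    by move=> T /xF TF; split; [exact: Fs_S TF | exact: Fs_card TF].
  have -> : flux u r = flux one r - 2 * flux x r.
    rewrite /flux mulr_sumr -sumrB; apply: eq_bigr => f _; rewrite /u; ring.
  by rewrite fx Y2 // ridge2 // subrr.
have uodd f : f \in Fs s -> u f != 0.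
  move=> fF; rewrite /u /one fF; move: (x f) => z; lia.
have [f0 f0F] := pure sS.
have usq f : f \in Fs s -> u f * u f = u f0 * u f0.
  by move=> fF; apply: (prod_const sS le lQ ucons ucons fF f0F).
pose w f : int := if u f == u f0 then 1 else -1.
have uw f : f \in Fs s -> u f = w f * u f0.
  move=> fF; rewrite /w; case: eqP => [->|ne]; first by rewrite mul1r.
  have := eqf_sqr (u f) (u f0); rewrite !expr2 usq // eqxx => /esym/orP[/eqP//|/eqP ->].
  by rewrite mulN1r.
apply: (@Q_of_w s w sS le lQ).
  by move=> f _; rewrite /w; case: (_ == _); rewrite ?mulr1 ?mulrNN ?mulr1.
move=> r rS sr cr lt.
have : flux u r = u f0 * flux w r.
  rewrite /flux mulr_sumr; apply: eq_bigr => f fF; rewrite uw ?(Fs_mono sr fF) //; ring.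
rewrite ucons // => /esym/eqP; rewrite mulf_eq0 (negbTE (uodd _ f0F)) /= => /eqP.
done.
Qed.

Definition cab s a b : chain V :=
  [ffun t => (t == a |: s)%:Z * incid (a |: s) s - (t == b |: s)%:Z * incid (b |: s) s].

Lemma cyc_ab s a b : a \notin s -> b \notin s -> a |: s \in S -> b |: s \in S ->
  rcycle S (cost S s) (#|s|.+1) (cab s a b).
Proof.
move=> as_ bs aS bS.
pose ia := incid (a |: s) s; pose ib := incid (b |: s) s.
have ia2 : ia * ia = 1 by rewrite /ia incid_U1 // sign_sq.
have ib2 : ib * ib = 1 by rewrite /ib incid_U1 // sign_sq.
split.
  move=> t; rewrite ffunE.
  case: (@eqP _ t (a |: s)) => [->|_].
    by move=> _; rewrite aS notin_cost ?subsetUr //= card_U1.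
  case: (@eqP _ t (b |: s)) => [->|_].
    by move=> _; rewrite bS notin_cost ?subsetUr //= card_U1.
  by rewrite !mul0r subrr eqxx.
move=> t tS; rewrite in_cost tS negbK /= => st.
rewrite /bdry ffunE.
rewrite (eq_bigr (fun x => (x == a |: s)%:Z * (ia * incid x t) -
                           (x == b |: s)%:Z * (ib * incid x t))); last first.
  by move=> x _; rewrite ffunE mulrBl !mulrA.
rewrite sumrB !sum_delta.
case: (eqVneq t s) => [->|ts]; first by rewrite ia2 ib2 subrr.
have -> : incid (a |: s) t = 0.
  by apply/eqP; apply: contraTT ts => /(incid_U1_only as_ st) ->; rewrite negbK.
have -> : incid (b |: s) t = 0.
  by apply/eqP; apply: contraTT ts => /(incid_U1_only bs st) ->; rewrite negbK.
by rewrite !mulr0 subrr.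
Qed.

Lemma eDb s a b : a \notin s -> b \notin s -> a != b -> (a |: (b |: s)) :\ b = a |: s.
Proof.
move=> as_ bs ab; apply/setP => u; rewrite !inE; case: (eqVneq u b) => [->|] /=.
  by rewrite eq_sym (negbTE ab) (negbTE bs).
by [].
Qed.

Lemma eDa s a b : a \notin s -> b \notin s -> a != b -> (a |: (b |: s)) :\ a = b |: s.
Proof.
move=> as_ bs ab; apply/setP => u; rewrite !inE; case: (eqVneq u a) => [->|] /=.
  by rewrite (negbTE ab) (negbTE as_).
by [].
Qed.

Lemma U2D s a b : a \notin s -> b \notin s -> (a |: (b |: s)) :\: s = [set a; b].
Proof.
move=> as_ bs; apply/setP => u; rewrite !inE.
case: (eqVneq u a) => [->|ua]; first by rewrite as_.
case: (eqVneq u b) => [->|ub]; first by rewrite bs.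
by rewrite /= ?andbN ?andNb; case: (u \in s).
Qed.

Lemma incid_e_only s a b t : a \notin s -> b \notin s -> a != b -> s \subset t ->
  incid (a |: (b |: s)) t != 0 -> t = a |: s \/ t = b |: s.
Proof.
move=> as_ bs ab st /incid_nz [x xe tE].
move: xe; rewrite !inE => /or3P[/eqP xa|/eqP xb|xs].
- by right; rewrite tE xa eDa.
- by left; rewrite tE xb eDb.
- by move: (subsetP st x xs); rewrite tE !inE eqxx.
Qed.

Lemma proper_U1 s v : v \notin s -> s \proper v |: s.
Proof.
move=> vs; rewrite properEneq subsetUr andbT.
by apply: contraNneq vs => ->; rewrite setU11.
Qed.

Lemma Q_low s : s \in S -> (#|s|.+3 <= N)%N ->
  (forall t, t \in S -> s \proper t -> Q t) -> Q s.
Proof.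
move=> sS le IH.
have le2 : (#|s|.+2 <= N)%N by apply: ltnW.
have lt : (#|s| < N)%N by move: le; lia.
have lQ : linkQ s by move=> v vs vS; apply: IH vS (proper_U1 vs).
have eQ a b : a \notin s -> b \notin s -> a |: (b |: s) \in S -> Q (a |: (b |: s)).
  move=> as_ bs eS; apply: IH eS _.
  by apply: proper_sub_trans (proper_U1 bs) _; apply: subsetUr.
have [o oP] : exists o : V -> {set V} -> int, forall v, v \notin s -> v |: s \in S ->
   (forall f, f \in Fs (v |: s) -> o v f * o v f = 1) /\ cons (v |: s) (o v).
  apply: (@fin_all_exists V (fun _ => {set V} -> int)
    (fun v ov => v \notin s -> v |: s \in S ->
      (forall f, f \in Fs (v |: s) -> ov f * ov f = 1) /\ cons (v |: s) ov)).
  move=> v; case: (boolP (v \notin s)) => vs; last by exists (fun _ => 0).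
  case: (boolP (v |: s \in S)) => vS; last by exists (fun _ => 0).
  by have [w [wp [wc _]]] := lQ v vs vS; exists w.
have opm v f : v \notin s -> f \in Fs (v |: s) -> o v f * o v f = 1.
  move=> vs fF; apply: (oP v vs _).1 => //.
  exact: HS (Fs_S fF) (Fs_sub fF).
have [f0 f0F] := pure sS.
have [a0 a0s a0F] := exists_link_in f0F lt.
have a0S : a0 |: s \in S := HS (Fs_S a0F) (Fs_sub a0F).
have kN1 : #|s|.+1 != N by move: le; lia.
have kN2 : #|s|.+2 != N by move: le; lia.
have [p pP] : exists p : V -> chain V, forall a, a \notin s -> a |: s \in S ->
    supported S (cost S s) #|s|.+2 (p a) /\
    (forall t, t \in S -> t \notin cost S s -> cab s a a0 t = bdry (p a) t).
  apply: (@fin_all_exists V (fun _ => chain V)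
    (fun a pa => a \notin s -> a |: s \in S ->
    supported S (cost S s) #|s|.+2 pa /\
    (forall t, t \in S -> t \notin cost S s -> cab s a a0 t = bdry pa t))).
  move=> a; case: (boolP (a \notin s)) => as_; last by exists [ffun _ => 0].
  case: (boolP (a |: s \in S)) => aS; last by exists [ffun _ => 0].
  have [_ [d [ds dE]]] := Hloc sS kN1 (cyc_ab as_ a0s aS a0S).
  by exists d.
pose pf e := odflt set0 [pick f in Fs e].
have pfP e f : f \in Fs e -> pf e \in Fs e.
  by move=> fF; rewrite /pf; case: pickP => [g ->|/(_ f)] //=; rewrite fF.
pose beta e : 'Z_2 := \sum_(u in e :\: s) h2 (o u (pf e)).
have betaE a b f : a \notin s -> b \notin s -> a != b -> f \in Fs (a |: (b |: s)) ->
    beta (a |: (b |: s)) = h2 (o a f) + h2 (o b f).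
  move=> as_ bs ab fF.
  set e := a |: (b |: s) in fF *.
  have eS : e \in S := HS (Fs_S fF) (Fs_sub fF).
  have gF := pfP _ _ fF.
  have ae : a |: s \subset e by apply: setUS; apply: subsetUr.
  have be : b |: s \subset e by apply: subsetUr.
  rewrite /beta /e U2D // big_setU1 ?big_set1 /=; last by rewrite inE.
  have pa g : g \in Fs e -> o a g * o a g = 1 by move=> gg; apply: opm => //; apply: Fs_mono gg.
  have pb g : g \in Fs e -> o b g * o b g = 1 by move=> gg; apply: opm => //; apply: Fs_mono gg.
  rewrite -!h2M ?pa ?pb //.
  congr h2; apply: (Prod0 (eQ _ _ as_ bs eS)) => //.
    exact: cons_mono ae (oP a as_ (HS eS ae)).2.
  exact: cons_mono be (oP b bs (HS eS be)).2.
pose Es := [set e in S | (s \subset e) && (#|e| == #|s|.+2)].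
pose Phi (z : chain V) : 'Z_2 := \sum_(e in Es) (z e)%:~R * beta e.
have EsD T v : T \in S -> s \subset T -> #|T| = #|s|.+3 -> v \in T ->
    (T :\ v \in Es) = (v \notin s).
  move=> TS sT cT vT; rewrite inE subsetD1 sT /= (HS TS (subD1set T v)) /=.
  have -> : #|T :\ v| = #|s|.+2 by move: cT; rewrite (cardsD1 v T) vT => -[].
  by rewrite eqxx andbT.
have cocyc (D : chain V) (z : chain V) : supported S (cost S s) #|s|.+3 D ->
    (forall e, e \in Es -> z e = bdry D e) -> Phi z = 0.
  move=> Dsup zE.
  rewrite /Phi (eq_bigr (fun e => (bdry D e)%:~R * beta e)); last first.
    by move=> e eE; rewrite zE.
  rewrite (eq_bigr (fun e => \sum_T (D T)%:~R * ((incid T e)%:~R * beta e))); last first.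
    move=> e _; rewrite /bdry ffunE rmorph_sum big_distrl /=.
    by apply: eq_bigr => T _; rewrite rmorphM /= mulrA.
  rewrite exchange_big /=; apply: big1 => T _.
  case: (eqVneq (D T) 0) => [->|DT].
    by rewrite big1 // => e _; rewrite rmorph0 mul0r.
  rewrite -mulr_sumr.
  have /and3P[TS Tc /eqP cT] := Dsup T DT.
  move: Tc; rewrite in_cost TS negbK /= => sT.
  suff -> : \sum_(e in Es) (incid T e)%:~R * beta e = 0 by rewrite mulr0.
  transitivity (\sum_(v in T :\: s) beta (T :\ v)).
    rewrite (eq_bigr (fun e => \sum_(v in T | e == T :\ v) beta e)); last first.
      move=> e _; rewrite incid_z2' big_distrl /=.
      by apply: eq_bigr => v _; rewrite mul1r.
    transitivity (\sum_e \sum_v (if (e \in Es) && ((v \in T) && (e == T :\ v))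
                                  then beta e else 0)).
      rewrite big_mkcond; apply: eq_bigr => e _; case: (e \in Es) => /=.
        by rewrite big_mkcond.
      by rewrite big1.
    rewrite exchange_big /= [RHS]big_mkcond; apply: eq_bigr => v _.
    rewrite (bigD1 (T :\ v)) //= big1 ?addr0; last first.
      by move=> e /negbTE ne; rewrite ne !andbF.
    rewrite eqxx andbT [v \in T :\: s]inE.
    case: (boolP (v \in T)) => vT; last by rewrite !andbF.
    by rewrite !andbT (EsD T v TS sT cT vT).
  have [fT fTF] := pure TS.
  rewrite (eq_bigr (fun v => \sum_(u in (T :\: s) :\ v) h2 (o u fT))).
    by apply: tri; rewrite cardsD (setIidPr sT) cT -addn3 addKn.
  move=> v; rewrite inE => /andP[vs vT].
  have sTv : s \subset T :\ v by rewrite subsetD1 sT vs.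
  have cTv : #|T :\ v| = #|s|.+2 by move: cT; rewrite (cardsD1 v T) vT => -[].
  have [a [b [as_ bs ab TvE]]] := decomp2 sTv cTv.
  have fTv : fT \in Fs (T :\ v) by apply: Fs_mono fTF; apply: subD1set.
  rewrite TvE (betaE a b fT) //; last by rewrite -TvE.
  have -> : (T :\: s) :\ v = [set a; b].
    by rewrite -(U2D as_ bs) -TvE !setDDl setUC.
  by rewrite big_setU1 ?big_set1 //= inE.
pose Lam a := Phi (p a).
have key a b : a \notin s -> b \notin s -> a != b -> a |: (b |: s) \in S ->
    Lam a + Lam b = beta (a |: (b |: s)).
  move=> as_ bs ab eS.
  set e := a |: (b |: s) in eS *.
  have ae : a |: s \subset e by apply: setUS; apply: subsetUr.
  have be : b |: s \subset e by apply: subsetUr.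
  have aS := HS eS ae; have bS := HS eS be.
  have [pas pae] := pP a as_ aS; have [pbs pbe] := pP b bs bS.
  have se : s \subset e by apply: subset_trans (subsetUr _ _) ae.
  have ce : #|e| = #|s|.+2 by rewrite /e card_U1 ?card_U1 // !inE negb_or as_ andbT.
  set ia := incid (a |: s) s; set ib := incid (b |: s) s.
  set iea := incid e (a |: s); set ieb := incid e (b |: s).
  have ia2 : ia * ia = 1 by rewrite /ia incid_U1 // sign_sq.
  have ib2 : ib * ib = 1 by rewrite /ib incid_U1 // sign_sq.
  have iea2 : iea * iea = 1 by rewrite /iea -(eDb as_ bs ab) incid_pm1 // !inE eqxx orbT.
  have ieb2 : ieb * ieb = 1 by rewrite /ieb -(eDa as_ bs ab) incid_pm1 // !inE eqxx.
  have d2 : iea * ia + ieb * ib = 0 by apply: d2_local.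
  pose kappa : int := - (ia * iea).
  pose q : chain V := [ffun T => p a T - p b T + kappa * (T == e)%:Z].
  have cyc : rcycle S (cost S s) #|s|.+2 q.
    split.
      move=> T; rewrite ffunE; case: (@eqP _ T e) => [->|ne] nz.
        by rewrite eS notin_cost //= ce.
      case: (eqVneq (p a T) 0) => [paT|paT]; last exact: pas.
      apply: pbs; apply: contraNneq nz => pbT.
      by rewrite paT pbT subrr mulr0 addr0.
    move=> t tS tc.
    have st : s \subset t by move: tc; rewrite in_cost tS negbK.
    have -> : bdry q t = bdry (p a) t - bdry (p b) t + kappa * incid e t.
      rewrite /bdry !ffunE -sumrB.
      rewrite (eq_bigr (fun T => (p a T * incid T t - p b T * incid T t) +
                   (T == e)%:Z * (kappa * incid T t))); last first.
        by move=> T _; rewrite ffunE; ring.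
      by rewrite big_split /= sum_delta.
    rewrite -pae // -pbe // /cab !ffunE -/ia -/ib.
    case: (@eqP _ t (a |: s)) => [ta|ta].
      have -> : (t == b |: s) = false by rewrite ta U1_eq // (negbTE ab).
      rewrite ta -/iea /kappa mulNr -mulrA iea2 mulr1.
      have E1 : (true%:Z : int) = 1 by []. have E0 : (false%:Z : int) = 0 by [].
      rewrite E1 E0; ring.
    case: (@eqP _ t (b |: s)) => [tb|tb].
      rewrite tb -/ieb /kappa.
      have E1 : (true%:Z : int) = 1 by []. have E0 : (false%:Z : int) = 0 by [].
      rewrite E1 E0 mulNr.
      have -> : ia * iea * ieb = - ib.
        have : iea * ia = - (ieb * ib) by apply/eqP; rewrite -addr_eq0 d2.
        by rewrite mulrC => ->; rewrite mulNr -mulrA (mulrC ib) mulrA ieb2 mul1r.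
      ring.
    have -> : incid e t = 0.
      case: (eqVneq (incid e t) 0) => // nz; exfalso.
      by case: (incid_e_only as_ bs ab st nz) => E; [exact: ta E|exact: tb E].
    by rewrite mulr0 addr0 !mul0r !sub0r subrr.
  have [_ [D [Dsup DE]]] := Hloc sS kN2 cyc.
  have Phiq : Phi q = 0.
    apply: cocyc Dsup _ => e' e'E; apply: DE.
      by move: e'E; rewrite inE => /andP[].
    by move: e'E; rewrite inE => /and3P[_ se' _]; apply: notin_cost.
  have eEs : e \in Es by rewrite inE eS se ce eqxx.
  have kap1 : (kappa%:~R : 'Z_2) = 1.
    have : kappa * kappa = 1 by rewrite /kappa mulrNN mulrACA ia2 iea2 mulr1.
    by case/pm1_cases' => ->; [rewrite rmorph1 | exact: z2_m1].
  have : Phi q = Lam a - Lam b + beta e.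
    rewrite /Lam /Phi.
    rewrite (eq_bigr (fun e' => ((p a e')%:~R * beta e' - (p b e')%:~R * beta e') +
                       (e' == e)%:R * beta e')); last first.
      move=> e' _; rewrite ffunE intrD intrB intrM kap1 mul1r mulrDl mulrBl.
      by case: (e' == e).
    rewrite big_split /= sumrB; congr (_ + _).
    rewrite (bigD1 e) //= eqxx mul1r big1 ?addr0 //.
    by move=> e' /andP[_ /negbTE ->]; rewrite mul0r.
  rewrite Phiq z2_opp => /esym H.
  by apply: z2_eq.
have lk v f : v \in f :\: s -> f \in Fs s ->
    [/\ v \notin s, v |: s \in S & f \in Fs (v |: s)].
  rewrite inE => /andP[vs vf] fF.
  have vsf : v |: s \subset f by rewrite subUset sub1set vf (Fs_sub fF).
  split => //; first exact: HS (Fs_S fF) vsf.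
  by rewrite in_Fs (Fs_S fF) (Fs_card fF) eqxx vsf.
pose vf f := odflt a0 [pick v in f :\: s].
have vfP f : f \in Fs s -> vf f \in f :\: s.
  move=> fF; have [v vs vF] := exists_link_in fF lt.
  have vin : v \in f :\: s by rewrite inE vs (subsetP (Fs_sub vF)) // setU11.
  by rewrite /vf; case: pickP => [g ->|/(_ v)] //=; rewrite vin.
have indep f a b : f \in Fs s -> a \in f :\: s -> b \in f :\: s ->
    sg2 (Lam a) * o a f = sg2 (Lam b) * o b f.
  move=> fF af bf.
  case: (eqVneq a b) => [->//|ab].
  have [as_ aS afF] := lk a f af fF; have [bs bS bfF] := lk b f bf fF.
  have ef : a |: (b |: s) \subset f.
    by rewrite !subUset !sub1set (Fs_sub fF) andbT; move: af bf; rewrite !inE => /andP[_ ->] /andP[_ ->].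
  have eS := HS (Fs_S fF) ef.
  have feF : f \in Fs (a |: (b |: s)) by rewrite in_Fs (Fs_S fF) (Fs_card fF) eqxx ef.
  apply: pm4; rewrite ?sg2pm ?opm //.
  by rewrite -sg2D key // (betaE a b f) // sg2D !sg2h ?opm.
pose w f := sg2 (Lam (vf f)) * o (vf f) f.
apply: (@Q_of_w s w sS le2 lQ).
  move=> f fF; rewrite /w mulrACA sg2pm mul1r.
  by have [vs _ vF] := lk _ f (vfP f fF) fF; apply: opm.
move=> r rS sr cr ltr.
have : (0 < #|r :\: s|)%N.
  by rewrite cardsD (setIidPr sr) cr subn_gt0; move: le; lia.
case/card_gt0P => v vr.
have [vs _] : v \notin s /\ v \in r by move: vr; rewrite inE => /andP[].
move: vr => vr.
have vrs : v |: s \subset r.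
  by rewrite subUset sub1set sr andbT; move: vr; rewrite inE => /andP[].
have vS : v |: s \in S := HS rS vrs.
have -> : flux w r = sg2 (Lam v) * flux (o v) r.
  rewrite /flux mulr_sumr; apply: eq_bigr => f fF.
  have fFs : f \in Fs s := Fs_mono sr fF.
  have vf' : v \in f :\: s.
    by move: vr; rewrite !inE => /andP[-> /(subsetP (Fs_sub fF))].
  by rewrite /w (indep f (vf f) v fFs (vfP f fFs) vf') mulrA.
by rewrite ((oP v vs vS).2 r rS vrs cr ltr) mulr0.
Qed.

Lemma sup_top G (d : chain V) : supported S G N.+1 d -> forall x, d x = 0.
Proof.
move=> ds x; apply/eqP; apply: contraT => nz.
have /and3P[xS _ /eqP cx] := ds x nz.
by have := card_le xS; rewrite cx ltnn.
Qed.

Lemma rbound_top G (c : chain V) : rbound S G N c -> forall x, x \in S -> x \notin G -> c x = 0.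
Proof.
move=> [_ [d [ds dE]]] x xS xG; rewrite dE // /bdry ffunE big1 // => T _.
by rewrite (sup_top ds) mul0r.
Qed.

Lemma rbound0 G k (c : chain V) : (forall x, c x = 0) -> rbound S G k c.
Proof.
move=> c0; split; first by move=> x; rewrite c0 eqxx.
exists [ffun _ => 0]; split; first by move=> x; rewrite ffunE eqxx.
move=> x _ _; rewrite c0 /bdry ffunE big1 // => T _; by rewrite ffunE mul0r.
Qed.

Lemma facet_notH f : f \in S -> #|f| = N -> ~ Hzero S (cost S f) N.
Proof.
move=> fS cf H.
pose c : chain V := [ffun t => (t == f)%:Z].
have cyc : rcycle S (cost S f) N c.
  split.
    move=> t; rewrite ffunE; case: (@eqP _ t f) => [->|] // _.
    by rewrite fS notin_cost ?cf ?eqxx.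
  move=> t tS tc; rewrite /bdry ffunE (bigD1 f) //= big1 ?ffunE ?eqxx ?mul1r ?addr0.
    apply/eqP; apply: contraT => /incid_nz [v vs et].
    move: tc; rewrite in_cost tS /= negbK => /subsetP/(_ v vs).
    by rewrite et !inE eqxx.
  by move=> x xs; rewrite ffunE (negbTE xs) mul0r.
have := rbound_top (H c cyc) fS (notin_cost (subxx f)).
by rewrite ffunE eqxx.
Qed.

Definition c12 r f1 f2 : chain V :=
  [ffun T => (T == f1)%:Z * incid f1 r - (T == f2)%:Z * incid f2 r].

Lemma c12_cyc r f1 f2 : #|r| = N.-1 -> f1 \in Fs r -> f2 \in Fs r ->
  rcycle S (cost S r) N (c12 r f1 f2).
Proof.
move=> cr f1F f2F.
have ip f : f \in Fs r -> incid f r * incid f r = 1.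
  by move=> fF; apply: incid_pm1' (Fs_sub fF) _; rewrite (Fs_card fF) cr prednK.
split.
  move=> T; rewrite ffunE.
  case: (@eqP _ T f1) => [->|_].
    by move=> _; rewrite (Fs_S f1F) notin_cost ?(Fs_sub f1F) //= (Fs_card f1F).
  case: (@eqP _ T f2) => [->|_].
    by move=> _; rewrite (Fs_S f2F) notin_cost ?(Fs_sub f2F) //= (Fs_card f2F).
  by rewrite !mul0r subrr eqxx.
move=> t tS; rewrite in_cost tS negbK /= => rt.
rewrite /bdry ffunE.
rewrite (eq_bigr (fun x => (x == f1)%:Z * (incid f1 r * incid x t) -
                           (x == f2)%:Z * (incid f2 r * incid x t))); last first.
  by move=> x _; rewrite ffunE mulrBl !mulrA.
rewrite sumrB !sum_delta.
have only f : f \in Fs r -> incid f t != 0 -> t = r.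
  move=> fF /incid_sub [tf ct]; apply: sub_eq_card rt _.
  by rewrite ct (Fs_card fF) cr.
case: (eqVneq t r) => [->|tr]; first by rewrite ip // ip // subrr.
have -> : incid f1 t = 0 by apply/eqP; apply: contraNT tr => /(only _ f1F) ->.
have -> : incid f2 t = 0 by apply/eqP; apply: contraNT tr => /(only _ f2F) ->.
by rewrite !mulr0 subrr.
Qed.

Lemma two_notH r f1 f2 : r \in S -> #|r| = N.-1 -> f1 \in Fs r -> f2 \in Fs r ->
  f1 != f2 -> ~ Hzero S (cost S r) N.
Proof.
move=> rS cr f1F f2F ne H.
have := rbound_top (H _ (c12_cyc cr f1F f2F)) (Fs_S f1F) (notin_cost (Fs_sub f1F)).
rewrite ffunE eqxx (negbTE ne) mul1r mul0r subr0 => i0.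
have : incid f1 r * incid f1 r = 1.
  by apply: incid_pm1' (Fs_sub f1F) _; rewrite (Fs_card f1F) cr prednK.
by rewrite i0 mul0r.
Qed.

Lemma three_notZ r f1 f2 f3 : r \in S -> #|r| = N.-1 -> f1 \in Fs r -> f2 \in Fs r ->
  f3 \in Fs r -> f1 != f2 -> f1 != f3 -> f2 != f3 -> ~ HisZ S (cost S r) N.
Proof.
move=> rS cr f1F f2F f3F n12 n13 n23 [z [zc [zall _]]].
have ip f : f \in Fs r -> incid f r * incid f r = 1.
  by move=> fF; apply: incid_pm1' (Fs_sub fF) _; rewrite (Fs_card fF) cr prednK.
have nz f : f \in Fs r -> incid f r != 0.
  by move=> fF; apply: contra_eq_neq (ip f fF) => ->; rewrite mul0r.
have [m1 h1] := zall _ (c12_cyc cr f1F f2F).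
have [m2 h2] := zall _ (c12_cyc cr f1F f3F).
have E1 f : f \in Fs r -> c12 r f1 f2 f - m1 * z f = 0.
  move=> fF; have := rbound_top h1 (Fs_S fF) (notin_cost (Fs_sub fF)).
  by rewrite ffunE.
have E2 f : f \in Fs r -> c12 r f1 f3 f - m2 * z f = 0.
  move=> fF; have := rbound_top h2 (Fs_S fF) (notin_cost (Fs_sub fF)).
  by rewrite ffunE.
have a3 := E1 _ f3F; have b3 := E2 _ f3F; have a1 := E1 _ f1F.
rewrite !ffunE eq_sym (negbTE n13) eq_sym (negbTE n23) eqxx in a3 b3.
rewrite !ffunE eqxx (negbTE n12) in a1.
have E1' : (true%:Z : int) = 1 by []. have E0' : (false%:Z : int) = 0 by [].
rewrite E1' E0' in b3 a1.
move: a3; rewrite !mul0r subrr sub0r => /eqP; rewrite oppr_eq0 mulf_eq0.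
case/orP => [/eqP m10|/eqP z3].
  move: a1; rewrite m10 mul0r mul1r mul0r !subr0 => i0.
  by move: (nz _ f1F); rewrite i0 eqxx.
move: b3; rewrite z3 mulr0 subr0 mul0r sub0r mul1r => /eqP; rewrite oppr_eq0 => /eqP i0.
by move: (nz _ f3F); rewrite i0 eqxx.
Qed.


Lemma Q_all s : s \in S -> Q s.
Proof.
move=> sS0; suff H : forall n s0, s0 \in S -> (N - #|s0| <= n)%N -> Q s0.
  by apply: (H _ s sS0 (leqnn _)).
clear sS0; elim=> [|n IH] {}s sS hn.
  apply: Q_facet => //; apply/eqP; rewrite eqn_leq card_le //=; move: hn; lia.
have IH' t : t \in S -> s \proper t -> Q t.
  move=> tS st; have ct := card_le tS; apply: IH tS _.
  have := proper_card st; move: hn ct; lia.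
have cs := card_le sS.
case: (ltngtP #|s|.+2 N) => c.
- by apply: Q_low.
- case: (eqVneq #|s| N) => [e|ne]; first exact: Q_facet.
  by apply: Q_ridge => //; move: c cs ne; lia.
- by apply: Q_codim2 => // v vs vS; apply: IH' vS (proper_U1 vs).
Qed.


Lemma ridge_H r : r \in S -> #|r| = N.-1 -> (#|Fs r| <= 1)%N -> Hzero S (cost S r) N.
Proof.
move=> rS cr le c [csup ccyc]; apply: rbound0 => x.
have cF y : c y != 0 -> y \in Fs r.
  move/csup/and3P => [yS yc cy]; move: yc; rewrite in_cost yS negbK /= => ry.
  by rewrite in_Fs yS cy ry.
case: (set_0Vmem (Fs r)) => [E|[f fF]].
  by apply/eqP; apply: contraT => /cF; rewrite E inE.
have one g : g \in Fs r -> g = f by move=> gF; move/card_le1_eqP: le => /(_ g f gF fF).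
have Fr : Fs r = [set f].
  by apply/setP => g; rewrite inE; apply/idP/eqP => [/one //|->].
have : flux c r = 0.
  rewrite flux_bdry ?ccyc ?notin_cost //.
  by move=> T /csup/and3P[TS _ /eqP cT].
rewrite /flux Fr big_set1 => /eqP; rewrite mulf_eq0 => /orP[/eqP cf0|/eqP i0]; last first.
  have : incid f r * incid f r = 1.
    by apply: incid_pm1' (Fs_sub fF) _; rewrite (Fs_card fF) cr prednK.
  by rewrite i0 mul0r.
case: (eqVneq (c x) 0) => // nz; have xf := one _ (cF _ nz).
by move: nz; rewrite xf cf0 eqxx.
Qed.

Lemma orient : orientable_Z S.
Proof.
pose B := [set s | (s \in S) && pb (Hzero S (cost S s) N)].
exists B; split.
  move=> s; rewrite inE; split => [/andP[-> /pbP //]|[-> /pbP //]].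
have [s1 s1S] : exists s, s \in S.
  case: (set_0Vmem S) => [E|[s sS]]; last by exists s.
  by move: HN; rewrite /dimS E big_set0.
have S0 : set0 \in S := HS s1S (sub0set s1).
have [f0 f0F] := pure S0.
have [w [wpm [wcons wall]]] := Q_all S0.
have inF0 f : (f \in Fs set0) = (f \in S) && (#|f| == N) by rewrite in_Fs sub0set andbT.
have nB f : f \in Fs set0 -> f \notin B.
  move=> fF; rewrite inE (Fs_S fF) /=; apply/negP => /pbP.
  by apply: facet_notH (Fs_S fF) (Fs_card fF).
pose z : chain V := [ffun f => if f \in Fs set0 then w f else 0].
have zsup T : z T != 0 -> T \in S /\ #|T| = N.
  rewrite ffunE; case: ifP => [TF _|]; last by rewrite eqxx.
  by split; [exact: Fs_S TF | exact: Fs_card TF].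
exists z; split; [|split].
- split.
    move=> T; rewrite ffunE; case: ifP => [TF _|]; last by rewrite eqxx.
    by rewrite (Fs_S TF) nB //= (Fs_card TF).
  move=> t tS tB; rewrite -flux_bdry //.
  case: (eqVneq #|t| N.-1) => [ct|ct].
    have lt : (1 < #|Fs t|)%N.
      rewrite ltnNge; apply/negP => le; move/negP: tB; apply.
      by rewrite inE tS /=; apply/pbP; apply: ridge_H.
    rewrite -(wcons t tS (sub0set t) ct lt) /flux; apply: eq_bigr => f fF.
    by rewrite ffunE (Fs_mono (sub0set t) fF).
  apply: big1 => f fF.
  case: (eqVneq (incid f t) 0) => [->|it]; first by rewrite mulr0.
  have [_ cft] := incid_sub it.
  by move: ct; rewrite cft (Fs_card fF) eqxx.
- move=> c [csup ccyc].
  have csup' T : c T != 0 -> T \in S /\ #|T| = N.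
    by move/csup/and3P => [TS _ /eqP cT].
  have cc : cons set0 c.
    move=> r rS _ cr lt; rewrite flux_bdry //; apply: ccyc => //.
    rewrite inE rS /=; apply/negP => /pbP.
    case/card_gt1P: lt => f1 [f2 [f1F f2F ne]].
    exact: two_notH rS cr f1F f2F ne.
  have [m hm] := wall c cc.
  exists m; apply: rbound0 => x; rewrite ffunE ffunE.
  case: (boolP (x \in Fs set0)) => xF; first by rewrite hm // subrr.
  rewrite mulr0 subr0; apply/eqP; apply: contraT => /csup' [xS cx].
  by rewrite inF0 xS cx eqxx in xF.
- move=> m hm.
  have := rbound_top hm (Fs_S f0F) (nB _ f0F).
  rewrite !ffunE f0F => /eqP; rewrite mulf_eq0 => /orP[/eqP //|/eqP w0].
  by have := wpm _ f0F; rewrite w0 mul0r.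
Qed.

End Main.

Lemma connect_triv (V : finType) (S : {set {set V}}) (u v : V) :
  (forall x, x \in S -> (#|x| <= 1)%N) ->
  connect (fun a b => [set a; b] \in S) u v -> u = v.
Proof.
move=> H /connectP [p pth ->]; elim: p u pth => [//|x p IH] u /= /andP[e pth].
have := H _ e; rewrite cards2 ltnS leqn0 eqb0 negbK => /eqP ->.
exact: IH.
Qed.

Theorem theorem14 (V : finType) (S : {set {set V}}) :
  hmanifold S -> CM_Z S -> orientable_Z S.
Proof.
move=> [HS hm] [CM1 [CM2 [s0 [s0S s0n _]]]].
have HN : (0 < dimS S)%N.
  by apply: leq_trans (card_le s0S); rewrite card_gt0.
have cost0 : cost S set0 = set0.
  by apply/setP => t; rewrite in_cost sub0set andbF inE.
have Hloc s : s \in S -> forall k, k != dimS S -> Hzero S (cost S s) k.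
  move=> sS k kN; case: (eqVneq s set0) => [->|sn]; first by rewrite cost0; apply: CM2.
  exact: CM1.
apply: (orient HS Hloc HN) => r rS cr.
rewrite leqNgt; apply/negP => /card_gt2P [f1 [f2 [f3 [[f1F f2F f3F] [n12 n23 n31]]]]].
case: hm => [[a [b [ab SE]]]|SE|[conn [loc _]]].
- have sub : Fs S r \subset [set [set a]; [set b]].
    apply/subsetP => f fF; have fS := Fs_S fF; have cf := Fs_card fF.
    move: fS; rewrite SE !inE; case/orP => [/orP[/eqP f0|/eqP ->]|/eqP ->]; rewrite ?eqxx ?orbT //.
    by move: cf HN; rewrite f0 cards0 => <-.
  have := subset_leq_card sub; rewrite cards2.
  have : (2 < #|Fs S r|)%N by apply/card_gt2P; exists f1, f2, f3.
  by case: (a != b) => /=; lia.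
- by move: s0S s0n; rewrite SE inE => ->.
- case: (eqVneq r set0) => [r0|rn].
    have N1 : dimS S = 1%N by move: cr HN; rewrite r0 cards0; lia.
    have le1 x : x \in S -> (#|x| <= 1)%N by move=> xS; rewrite -N1 card_le.
    have sing f : f \in Fs S r -> exists u, f = [set u].
      by move=> fF; apply/cards1P; rewrite (Fs_card fF) N1.
    have [u1 E1] := sing _ f1F; have [u2 E2] := sing _ f2F.
    have := connect_triv le1 (conn.2 u1 u2 _ _).
    rewrite -E1 -E2 (Fs_S f1F) (Fs_S f2F) => /(_ isT isT) u12.
    by move: n12; rewrite E1 E2 u12 eqxx.
  have [_ [Hz|Hz]] := loc r rS rn.
    exact: (two_notH HN rS cr f1F f2F n12 Hz).
  by apply: (three_notZ HN rS cr f1F f2F f3F n12 _ n23 Hz); rewrite eq_sym.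
Qed.
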